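(* Let $\gamma$ be continuous, increasing and concave near the origin, with $\lim_{x\downarrow0}\gamma(x)=0$, and assume $\mathrm{ind}_*(\gamma)>0$. Then $\gamma$ satisfies Condition $(\mathbf{C_{0+}})$: for every $\varepsilon\in(0,1)$ there exist constants $\mathsf{c}_\varepsilon>0$ and $x_\varepsilon>0$ such that $$\int_0^{1/2}\gamma(xy)\frac{dy}{y\sqrt{\log(1/y)}}\le \mathsf{c}_\varepsilon\,(\gamma(x))^{1-\varepsilon}\quad\text{for all }0<x<x_\varepsilon .$$
   Context: $\mathrm{ind}_*(\gamma):=\sup\{\alpha:\gamma(x)=o(x^\alpha)\text{ as }x\downarrow0\}$. *)

(* Defs.v *)
From HB Require Import structures.
From mathcomp Require Import all_boot all_order all_algebra.
From mathcomp Require Import all_classical all_reals all_analysis.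
Set Implicit Arguments. Unset Strict Implicit. Unset Printing Implicit Defensive.
Import Order.TTheory GRing.Theory Num.Theory.
Import numFieldNormedType.Exports.
Local Open Scope classical_set_scope.
Local Open Scope ring_scope.

(* The lower index ind_*(gamma) := sup { a : gamma(x) = o(x^a) as x -> 0+ },
   taken in the extended reals (the set may be empty or unbounded). *)
Definition ind_star (R : realType) (gamma : R -> R) : \bar R :=
  ereal_sup [set a%:E | a in
    [set a : R | (fun x => gamma x / x `^ a) @ 0^'+ --> 0]].

(* Main.v *)
Require Import Defs.
From HB Require Import structures.
From mathcomp Require Import all_boot all_order all_algebra.
From mathcomp Require Import all_classical all_reals all_analysis.
From mathcomp Require Import zify ring lra measurable_realfun.
Import Order.TTheory GRing.Theory Num.Theory.
Import numFieldNormedType.Exports.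
Local Open Scope classical_set_scope.
Local Open Scope ring_scope.

Lemma nm_le_integral (R : realType) (D : set R) (f g : R -> \bar R) :
  (forall x, D x -> (0 <= f x)%E) -> (forall x, D x -> (f x <= g x)%E) ->
  (\int[@lebesgue_measure R]_(x in D) f x <= \int[@lebesgue_measure R]_(x in D) g x)%E.
Proof.
move=> f0 fg.
have g0 : forall x, D x -> (0 <= g x)%E by move=> x Dx; exact: le_trans (f0 _ Dx) (fg _ Dx).
rewrite !ge0_integralE//.
apply: ge_ereal_sup => _ [h hf <-]; apply: ereal_sup_ubound; exists h => //= x.
exact: le_trans (hf x) (lee_restrict fg x).
Qed.

Lemma powR_le_neg (R : realType) (t y p : R) : 0 < t -> t <= y -> p <= 0 ->
  y `^ p <= t `^ p.
Proof.
move=> t0 ty p0; have e z : z `^ p = (z `^ (-p))^-1 by rewrite -powRN opprK.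
have y0 : 0 < y := lt_le_trans t0 ty.
rewrite !e lef_pV2 ?posrE ?powR_gt0//.
have := @ge0_ler_powR R (-p); rewrite oppr_ge0 => /(_ p0) H; apply: H => //; rewrite nnegrE ltW//.
Qed.

Section J.
Variable R : realType.
Let h : R := 2^-1.
Let P (k : nat) : set R := `]h ^+ k.+2, h ^+ k.+1]%classic.

Lemma h_gt0 : 0 < h. Proof. by rewrite /h invr_gt0. Qed.
Lemma h_lt1 : h < 1. Proof. by rewrite /h invf_lt1// ltr1n. Qed.

Lemma cover_P : (`]0, h]%classic : set R) = \bigcup_k P k.
Proof.
apply/seteqP; split => y /=.
  rewrite in_itv/= => /andP[y0 yh].
  have : exists n, h ^+ n < y.
    have := @cvg_expr R h; rewrite ger0_norm ?(ltW h_gt0)// => /(_ h_lt1).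
    move=> /cvgrPdist_lt/(_ y y0) [N _ HN]; exists N.
    by move: (HN N (leqnn N)); rewrite sub0r normrN ger0_norm// exprn_ge0// ltW// h_gt0.
  move=> ex; pose n := ex_minn ex.
  have [hn nmin] : h ^+ n < y /\ forall m, h ^+ m < y -> (n <= m)%N.
    by rewrite /n; case: ex_minnP.
  have n2 : (2 <= n)%N.
    rewrite leqNgt; apply/negP => n1.
    suff: y < y by rewrite ltxx.
    apply: le_lt_trans _ hn; apply: le_trans yh _; rewrite -[X in X <= _]expr1.
    by apply: ler_wiXn2l; rewrite ?(ltW h_gt0) ?(ltW h_lt1)// -ltnS.
  exists (n - 2)%N => //; rewrite /P /= in_itv/=; apply/andP; split.
    by rewrite -addn2 subnK.
  rewrite leNgt; apply/negP => /nmin; lia.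
move=> [k _]; rewrite /P/= !in_itv/= => /andP[hy yh]; apply/andP; split.
  exact: lt_trans (exprn_gt0 _ h_gt0) hy.
apply: le_trans yh _; rewrite -[X in _ <= X]expr1.
by apply: ler_wiXn2l; rewrite ?(ltW h_gt0) ?(ltW h_lt1).
Qed.

Lemma trivIset_P : trivIset setT P.
Proof.
apply/trivIsetP => i j _ _ ij; apply/seteqP; split => // y [].
rewrite /P/= !in_itv/= => /andP[hi ih] /andP[hj jh].
have hle m n : (m <= n)%N -> h ^+ n <= h ^+ m.
  by move=> mn; apply: ler_wiXn2l; rewrite ?(ltW h_gt0) ?(ltW h_lt1).
case: (ltngtP i j) ij => // [lij|lji] _.
  suff: y < y by rewrite ltxx.
  by apply: (le_lt_trans jh); apply: le_lt_trans hi; apply: hle.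
suff: y < y by rewrite ltxx.
by apply: (le_lt_trans ih); apply: le_lt_trans hj; apply: hle.
Qed.

Lemma measurable_P k : measurable (P k).
Proof. exact: measurable_itv. Qed.

Variable b : R.
Hypothesis b0 : 0 < b.
Hypothesis b1 : b < 1.
Let q := h `^ b.

Lemma int_piece k : (\int[@lebesgue_measure R]_(y in P k) (y `^ (b - 1))%:E
   <= (q ^+ k.+2)%:E)%E.
Proof.
set t := h ^+ k.+2.
have t0 : 0 < t by rewrite exprn_gt0 // h_gt0.
apply: (@le_trans _ _ (\int[@lebesgue_measure R]_(y in P k) (cst (t `^ (b - 1))%:E) y)%E).
  apply: nm_le_integral => y; rewrite /P/= in_itv/= => /andP[ty _].
    by rewrite lee_fin powR_ge0.
  by rewrite lee_fin; apply: powR_le_neg => //; [exact: ltW| rewrite subr_le0 ltW].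
rewrite integral_cst; last exact: measurable_P.
have lt21 : h ^+ k.+2 < h ^+ k.+1 by rewrite ltr_iXn2l ?h_gt0 ?h_lt1.
rewrite [X in (_ * X)%E](_ : _ = (h ^+ k.+1)%:E - (h ^+ k.+2)%:E)%E; last first.
  by rewrite /P; apply: (etrans (lebesgue_measure_itv _)); rewrite /= lte_fin lt21.
rewrite -EFinD -EFinM lee_fin.
have -> : h ^+ k.+1 - h ^+ k.+2 = t.
  by rewrite /t (exprS h k.+1) /h; field.
rewrite mulrC mulr_powRB1 ?(ltW t0)// /t /q.
by rewrite -powR_mulrn ?(ltW h_gt0)// -powRrM mulrC powRrM powR_mulrn ?powR_ge0.
Qed.
Lemma q_gt0 : 0 < q. Proof. by rewrite powR_gt0// h_gt0. Qed.
Lemma q_lt1 : q < 1.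
Proof.
rewrite lt_neqAle powR_eq1 negb_or lt_eqF ?h_lt1//= negb_or ltNge ltW ?h_gt0//= gt_eqF//=.
rewrite -(powRr0 h) /q; apply: ger_powR; [by rewrite h_gt0 ltW ?h_lt1| exact: ltW].
Qed.

Lemma J_bound : (\int[@lebesgue_measure R]_(y in (`]0%R, h]%classic : set R)) (y `^ (b - 1))%:E
   <= (q ^+ 2 / (1 - q))%:E)%E.
Proof.
rewrite cover_P ge0_integral_bigcup //; last first.
- exact: trivIset_P.
- by move=> y _; rewrite lee_fin powR_ge0.
- by apply/measurable_EFinP; apply: measurable_funTS; exact: measurable_powR.
- exact: measurable_P.
apply: (le_trans (@lee_nneseries R _ (fun k => (q ^+ k.+2)%:E) xpredT 0%N _ _)).
- by move=> i _ _; apply: integral_ge0 => y _; rewrite lee_fin powR_ge0.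
- by move=> n _; exact: int_piece.
apply: lime_le.
  by apply: is_cvg_nneseries => n _ _; rewrite lee_fin exprn_ge0// ltW// q_gt0.
apply: nearW => n; rewrite sumEFin lee_fin.
have := @geometric_le_lim R n (q ^+ 2) q (exprn_ge0 2 (ltW q_gt0)) q_gt0.
rewrite ger0_norm ?(ltW q_gt0)// => /(_ q_lt1).
apply: le_trans; rewrite le_eqVlt; apply/orP; left; apply/eqP.
by rewrite /series/=; apply: eq_bigr => k _; rewrite /geometric/= -exprD addnC addn2.
Qed.
End J.

Lemma near0P (R : realType) (P : R -> Prop) :
  (\forall x \near 0^'+, P x) -> exists2 e, 0 < e & forall x, 0 < x < e -> P x.
Proof.
move=> [e /= e0 H]; exists e => // x /andP[x0 xe]; apply: H => //=.
by rewrite sub0r normrN gtr0_norm.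
Qed.

Lemma gamma_ge0 (R : realType) (gamma : R -> R) (delta : R) :
  {in `]0, delta[ &, {homo gamma : x y / x <= y}} ->
  gamma x @[x --> 0^'+] --> 0 ->
  forall y, 0 < y < delta -> 0 <= gamma y.
Proof.
move=> hom g0 y /andP[y0 yd]; rewrite leNgt; apply/negP => gy.
move/cvgrPdist_lt: g0 => /(_ (- gamma y)); rewrite oppr_gt0 => /(_ gy) /near0P [e e0 H].
pose z := Num.min e y / 2.
have z0 : 0 < z by rewrite divr_gt0// lt_min e0.
have zy : z < Num.min e y by rewrite /z ltr_pdivrMr// ltr_pMr ?ltr1n// lt_min e0.
move: zy; rewrite lt_min => /andP[ze zy].
have := H z; rewrite z0 ze => /(_ erefl).
rewrite sub0r normrN ltr_norml opprK => /andP[+ _].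
rewrite ltNge; apply/negP/negPn; apply: hom.
- by rewrite in_itv/= z0 (lt_trans zy yd).
- by rewrite in_itv/= y0.
- exact: ltW.
Qed.
Lemma powR_le_base (R : realType) (r x y : R) : 0 <= r -> 0 <= x -> x <= y ->
  x `^ r <= y `^ r.
Proof.
move=> r0 x0 xy; have H := @ge0_ler_powR R r r0; apply: H => //; rewrite nnegrE//.
exact: le_trans x0 xy.
Qed.
Theorem lemma3p1 (R : realType) (gamma : R -> R) (delta : R) :
  0 < delta ->
  {within `]0, delta[, continuous gamma} ->
  {in `]0, delta[ &, {homo gamma : x y / x <= y}} ->
  (forall x y t, x \in `]0, delta[ -> y \in `]0, delta[ -> 0 <= t <= 1 ->
     t * gamma x + (1 - t) * gamma y <= gamma (t * x + (1 - t) * y)) ->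
  gamma x @[x --> 0^'+] --> 0 ->
  (0 < ind_star gamma)%E ->
  forall eps : R, 0 < eps < 1 ->
  exists c : R, exists xe : R, 0 < c /\ 0 < xe /\
    forall x : R, 0 < x < xe ->
      (\int[@lebesgue_measure R]_(y in (`]0%R, (2^-1)%R]%classic : set R))
          ((gamma (x * y) / (y * Num.sqrt (ln (y^-1)))))%:E
        <= (c * gamma x `^ (1 - eps))%:E)%E.
Proof.
move=> d0 _ hom _ g0 ind eps /andP[e0 e1].
have [a a0 Ha] : exists2 a, 0 < a & gamma x / x `^ a @[x --> 0^'+] --> 0.
  by move: ind => /ereal_sup_gt [_ [a Sa <-]]; rewrite lte_fin => a0; exists a.
have [x1 x10 Hx1] : exists2 x1, 0 < x1 & forall x, 0 < x < x1 -> gamma x <= x `^ a.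
  move/cvgrPdist_lt: Ha => /(_ 1 ltr01) /near0P [e e0' H]; exists e => // x xe.
  have x0 : 0 < x by case/andP: xe.
  have xa : 0 < x `^ a by rewrite powR_gt0.
  move: (H x xe); rewrite sub0r normrN => /(le_lt_trans (ler_norm _)).
  by rewrite ltr_pdivrMr// mul1r => /ltW.
have gge0 := @gamma_ge0 R gamma delta hom g0.
set a1 := Num.min a 1.
have a10 : 0 < a1 by rewrite lt_min a0 ltr01.
have a11 : a1 <= 1 by rewrite ge_min lexx orbT.
have a1a : a1 <= a by rewrite ge_min lexx.
set b := a1 * eps.
have b0 : 0 < b by rewrite mulr_gt0.
have b1 : b < 1 by rewrite /b (le_lt_trans (ler_wpM2r (ltW e0) a11))// mul1r.
set q := (2^-1 : R) `^ b.
have q0 : 0 < q by rewrite powR_gt0// invr_gt0.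
have q1 : q < 1.
  rewrite lt_neqAle powR_eq1 negb_or.
  rewrite (_ : (2^-1 : R) == 1 = false); last by apply/negbTE; rewrite lt_eqF// invf_lt1// ltr1n.
  rewrite /= negb_or ltNge ltW ?invr_gt0//= gt_eqF//=.
  rewrite -(powRr0 (2^-1 : R)) /q; apply: ger_powR; last exact: ltW.
  by rewrite invr_gt0 ltr0n/= invf_le1// ler1n.
have ln20 : 0 < ln (2 : R) by rewrite ln_gt0// ltr1n.
have sln20 : 0 < Num.sqrt (ln (2 : R)) by rewrite sqrtr_gt0.
set M := q ^+ 2 / (1 - q).
have M0 : 0 < M by rewrite divr_gt0 ?exprn_gt0// subr_gt0.
exists (M / Num.sqrt (ln 2)), (Num.min (Num.min x1 delta) 1); split; first by rewrite divr_gt0.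
split; first by rewrite !lt_min x10 d0 ltr01.
move=> x /andP[x0]; rewrite !lt_min => /andP[/andP[xx1 xd] xlt1].
set g := gamma x.
have g_ge0 : 0 <= g by apply: gge0; rewrite x0.
set K := g `^ (1 - eps) / Num.sqrt (ln 2).
have K0 : 0 <= K by rewrite divr_ge0 ?powR_ge0// ltW.
have pw : forall y, 0 < y <= 2^-1 ->
    0 <= gamma (x * y) / (y * Num.sqrt (ln y^-1)) /\
    gamma (x * y) / (y * Num.sqrt (ln y^-1)) <= K * y `^ (b - 1).
  move=> y /andP[y0 yh].
  have y1 : y < 1 by rewrite (le_lt_trans yh)// invf_lt1// ltr1n.
  have xy0 : 0 < x * y by rewrite mulr_gt0.
  have xyx : x * y < x by rewrite gtr_pMr.
  have xyy : x * y <= y by rewrite ger_pMl// ltW.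
  set s := gamma (x * y).
  have s0 : 0 <= s by apply: gge0; rewrite xy0 (lt_trans xyx).
  have sg : s <= g by apply: hom; rewrite ?in_itv/= ?xy0 ?x0 ?(lt_trans xyx) ?xd// ltW.
  have sa : s <= y `^ a1.
    apply: le_trans (Hx1 _ _) _; first by rewrite xy0 (lt_trans xyx).
    apply: (@le_trans _ _ ((x * y) `^ a1)).
      by apply: ger_powR => //; rewrite xy0 ltW// (lt_trans xyx).
    by apply: powR_le_base; rewrite ?(ltW xy0) ?(ltW a10).
  have L2 : ln 2 <= ln y^-1.
    by rewrite ler_ln ?posrE ?invr_gt0// -[2]invrK lef_pV2 ?posrE ?invr_gt0.
  have den0 : 0 < y * Num.sqrt (ln 2) by rewrite mulr_gt0.
  have den : y * Num.sqrt (ln 2) <= y * Num.sqrt (ln y^-1).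
    by rewrite ler_pM2l// ler_sqrt ?L2// (le_trans (ltW ln20) L2).
  split; first by rewrite divr_ge0// ltW// (lt_le_trans den0 den).
  apply: (@le_trans _ _ (s / (y * Num.sqrt (ln 2)))).
    by rewrite ler_pdivrMr ?(lt_le_trans den0 den)// mulrAC ler_pdivlMr// ler_wpM2l.
  have ssplit : s = s `^ (1 - eps) * s `^ eps.
    rewrite -powRD; last by rewrite subrK oner_eq0.
    by rewrite subrK powRr1.
  have sb : s <= g `^ (1 - eps) * y `^ b.
    rewrite [X in X <= _]ssplit; apply: ler_pM; rewrite ?powR_ge0//.
      by apply: powR_le_base; rewrite ?subr_ge0 ?(ltW e1).
    by rewrite /b powRrM; apply: powR_le_base; rewrite ?(ltW e0).
  rewrite ler_pdivrMr// /K.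
  rewrite (@powRB R y b 1); last by rewrite (gt_eqF y0) implybT.
  rewrite powRr1 ?(ltW y0)//.
  have -> : g `^ (1 - eps) / Num.sqrt (ln 2) * (y `^ b / y) * (y * Num.sqrt (ln 2))
      = g `^ (1 - eps) * y `^ b.
    rewrite -!mulrA; congr (_ * _); rewrite [y * _]mulrC !mulrA mulrC !mulrA.
    by field; rewrite ?(gt_eqF y0) ?(gt_eqF sln20).
  exact: sb.
apply: (@le_trans _ _ (\int[@lebesgue_measure R]_(y in (`]0%R, (2^-1)%R]%classic : set R))
   (K%:E * (y `^ (b - 1))%:E))%E).
  apply: nm_le_integral => y; rewrite /= in_itv/= => yy.
    by rewrite lee_fin; exact: (pw y yy).1.
  by rewrite -EFinM lee_fin; exact: (pw y yy).2.
rewrite ge0_integralZl_EFin//; last 2 first.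
- by move=> y _; rewrite lee_fin powR_ge0.
- by apply/measurable_EFinP; apply: measurable_funTS; exact: measurable_powR.
apply: (@le_trans _ _ (K%:E * M%:E)%E).
  by apply: lee_wpmul2l; rewrite ?lee_fin//; exact: J_bound.
rewrite -EFinM lee_fin /K le_eqVlt; apply/orP; left; apply/eqP.
by field; rewrite (gt_eqF sln20).
Qed.
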